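(* Let $K$ be a positive integer, let $\lambda_1^\star,\dots,\lambda_K^\star\ge0$, $C_1,\dots,C_K\ge0$, and $\mathcal{F}_1,\dots,\mathcal{F}_K\in(0,1)$. Set $\gamma_{-1}=\gamma_0=0$, $m_0=-1$, and for $k=1,\dots,K$ recursively $m_k=\max\{\mathcal{F}_k,\gamma_{k-1}\}$ and $\gamma_k=\frac1{k+1}+\frac{k}{k+1}m_k$. Let $\hat s_1\le\dots\le\hat s_K$ be integers with $\hat s_1\ge1$ and $1=s_0\le s_1\le\dots\le s_K$ be integers. Let $D_{k,s_k-1}\ge0$ ($k\in[K]$) be given, and let real numbers $B_{k,\ell}$ (integers $\ell\ge\hat s_k$) and $G_{k,\ell}$ (integers $\ell\ge s_k-1$) satisfy $0\le B_{k,\ell}\le2$ and, for all $k\in[K]$, $$B_{k,\ell}\le C_k\sum_{k'=1}^{k-1}\lambda_{k'}^\star G_{k',\ell-1}\quad(\ell\ge\hat s_k),$$ $$G_{k,\ell}\le\mathcal{F}_k^{\ell-s_k+1}D_{k,s_k-1}+\sum_{\ell'=s_k-1}^{\ell-1}\mathcal{F}_k^{\ell-\ell'}\big(B_{k,\ell'}+B_{k,\ell'-1}\big)+B_{k,\ell}\quad(\ell\ge s_k-1).$$ Define, recursively in $k$, $$\hat B_{k,\hat s_k}=C_k\sum_{k'=1}^{k-1}\lambda_{k'}^\star\hat G_{k',\hat s_k-1},\qquad \hat B_{k,\ell}=\min\big\{2,\ m_{k-1}^{\ell-\hat s_k}(\ell-\hat s_k+1)\hat B_{k,\hat s_k}\big\}\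 (\ell>\hat s_k),$$ $$\hat G_{k,s_k-1}=D_{k,s_k-1}+\hat B_{k,s_k-1}+\hat B_{k,s_k-2},\qquad \hat G_{k,\ell}=m_k^{\ell-s_k+1}(\ell-s_k+2)\hat G_{k,s_k-1}\ (\ell\ge s_k).$$ Suppose that for all $k\in[K]$: $\hat s_{k+1}\ge s_k$ (when $k<K$), $m_{k-1}^{s_k-\hat s_k-2}\le\frac{1}{s_k-\hat s_k-1}$, $s_k\ge\frac{km_{k-1}}{1-m_{k-1}}+\hat s_k+2$, and $\hat B_{k,\hat s_k}\le2$. Then for all $k\in[K]$: (1) $\hat B_{k,\ell}\ge B_{k,\ell}$ for all $\ell\ge\hat s_k$; and (2) $\hat G_{k,\ell}\ge G_{k,\ell}$ for all $\ell\ge s_k-1$.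
   Context: $[K]=\{1,\dots,K\}$. All indices $\ell,\ell'$ are integers. In the paper's application, $B_{k,\ell}=\|\mathbf{u}_{k,\ell}-\mathbf{u}_k^\star\|_2$ and $G_{k,\ell}=\|\mathbf{u}_k^\star-\mathbf{v}_{k,\ell}\|_2$ are distances between unit vectors and $D_{k,\ell}=\|\mathbf{v}_{k,\ell}-\mathbf{u}_{k,\ell}\|_2$, but the lemma is a statement about arbitrary sequences satisfying the displayed inequalities. *)

(* Defs.v *)
From mathcomp Require Import all_boot all_order all_algebra.
From mathcomp Require Import reals.
Set Implicit Arguments. Unset Strict Implicit. Unset Printing Implicit Defensive.
Import Order.TTheory GRing.Theory Num.Theory.
Local Open Scope ring_scope.

(* gamma_0 = 0, gamma_k = 1/(k+1) + k/(k+1) * max(F_k, gamma_{k-1}) for k >= 1.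
   (gamma_{-1} is never used since m_0 = -1 is fixed explicitly.) *)
Fixpoint gam (R : realType) (F : nat -> R) (k : nat) : R :=
  match k with
  | 0%N => 0
  | k'.+1 => 1 / (k'.+2)%:R + (k'.+1)%:R / (k'.+2)%:R * Num.max (F k'.+1) (gam F k')
  end.

Definition mseq (R : realType) (F : nat -> R) (k : nat) : R :=
  match k with
  | 0%N => -1
  | k'.+1 => Num.max (F k'.+1) (gam F k')
  end.

(* Main.v *)
Require Import Defs.
From mathcomp Require Import all_boot all_order all_algebra.
From mathcomp Require Import reals.
From mathcomp Require Import ring lra zify.
Import Order.TTheory GRing.Theory Num.Theory.
Local Open Scope ring_scope.

Lemma pfrac (R : realType) (n : nat) :
  (n.+1)%:R / (n.+2)%:R = 1 - 1 / (n.+2)%:R :> R.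
Proof.
have h : (n.+2)%:R != 0 :> R by rewrite pnatr_eq0.
apply: (mulIf h); rewrite mulrBl !mulfVK // mul1r -[n.+2]addn1 natrD; ring.
Qed.

Lemma pbnd (R : realType) (n : nat) : 0 < (1 / (n.+2)%:R : R) < 1.
Proof.
rewrite mul1r invr_gt0 ltr0n /= invf_lt1 ?ltr0n // ltr1n //.
Qed.

Lemma gamS (R : realType) (F : nat -> R) n :
  gam F n.+1 = 1 / (n.+2)%:R + (1 - 1 / (n.+2)%:R) * mseq F n.+1.
Proof. by rewrite /= pfrac. Qed.


Lemma gam_bnd (R : realType) (F : nat -> R) (K : nat) (F01 : forall k, (1 <= k <= K)%N -> 0 < F k < 1) k : (k <= K)%N -> 0 <= gam F k < 1.
Proof.
elim: k => [|k IH] hk; first by rewrite /= lexx ltr01.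
have [g0 g1] := andP (IH (ltnW hk)).
have [f0 f1] := andP (F01 (k.+1) hk).
rewrite gamS /mseq.
have [p0 p1] := andP (pbnd R k).
set p := 1 / _ in p0 p1 *.
set u := Num.max _ _.
have u0 : 0 <= u by rewrite le_max g0 orbT.
have u1 : u < 1 by rewrite gt_max f1 g1.
have h1 : 0 <= (1 - p) * u by apply: mulr_ge0; lra.
have h2 : (1 - p) * u < 1 - p by rewrite -{2}[1 - p]mulr1 ltr_pM2l //; lra.
apply/andP; split; lra.
Qed.

Lemma m_bnd (R : realType) (F : nat -> R) (K : nat) (F01 : forall k, (1 <= k <= K)%N -> 0 < F k < 1) k : (1 <= k <= K)%N -> 0 < mseq F k < 1 /\ F k <= mseq F k.
Proof.
case: k => [//|k] hk /=.
have [g0 g1] := andP (@gam_bnd R F K F01 k (ltnW hk)).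
have [f0 f1] := andP (F01 (k.+1) hk).
rewrite le_max lexx /= lt_max f0 /= gt_max f1 g1.
by [].
Qed.

Lemma m_le_gam (R : realType) (F : nat -> R) (K : nat) (F01 : forall k, (1 <= k <= K)%N -> 0 < F k < 1) k : (1 <= k <= K)%N -> mseq F k <= gam F k.
Proof.
case: k => [//|k] hk; rewrite gamS.
have [/andP[m0 m1] _] := @m_bnd R F K F01 k.+1 hk.
have [p0 p1] := andP (pbnd R k).
have : 0 <= (1 / (k.+2)%:R) * (1 - mseq F k.+1) by apply: mulr_ge0; [exact: ltW p0 | lra].
move=> h; rewrite -subr_ge0.
have -> : 1 / (k.+2)%:R + (1 - 1 / (k.+2)%:R) * mseq F k.+1 - mseq F k.+1
  = (1 / (k.+2)%:R) * (1 - mseq F k.+1) by ring.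
exact: h.
Qed.

Lemma m_step (R : realType) (F : nat -> R) (K : nat) (F01 : forall k, (1 <= k <= K)%N -> 0 < F k < 1) k : (1 <= k)%N -> (k < K)%N -> mseq F k <= mseq F k.+1.
Proof.
move=> h1 h2; apply: (le_trans (@m_le_gam R F K F01 k _)); first by rewrite h1 ltnW.
by rewrite /= le_max lexx orbT.
Qed.

Lemma m_mono (R : realType) (F : nat -> R) (K : nat) (F01 : forall k, (1 <= k <= K)%N -> 0 < F k < 1) i j : (1 <= i)%N -> (i <= j)%N -> (j <= K)%N -> mseq F i <= mseq F j.
Proof.
move=> hi; elim: j => [|j IH]; first by rewrite leqn0 => /eqP ->.
rewrite leq_eqVlt => /orP [/eqP -> //| hlt] hj.
apply: (le_trans (IH hlt (ltnW hj))); apply: (@m_step R F K F01) => //.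
exact: leq_trans hi hlt.
Qed.

Lemma m_rec (R : realType) (F : nat -> R) (K : nat) (F01 : forall k, (1 <= k <= K)%N -> 0 < F k < 1) n : (n.+2 <= K)%N ->
  1 / (n.+2)%:R + (1 - 1 / (n.+2)%:R) * mseq F n.+1 <= mseq F n.+2.
Proof. by move=> _; rewrite -gamS /= le_max lexx orbT. Qed.

Lemma xstep (R : realType) (M m q kk t : R) : 0 <= M < 1 -> 0 <= q -> q * kk = 1 ->
  q + (1 - q) * M <= m -> kk * M / (1 - M) <= t -> 0 <= t ->
  M * (t + 2) <= m * (t + 1).
Proof.
move=> /andP[M0 M1] q0 hqk hm ht t0.
have h1m : 0 < 1 - M by lra.
have hk : kk * M <= t * (1 - M) by rewrite -ler_pdivrMr.
have e : M = q * (kk * M) by rewrite mulrA hqk mul1r.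
have h1 : M <= q * (t * (1 - M)) by rewrite {1}e; apply: ler_wpM2l.
have h2 : (q + (1-q)*M) * (t+1) <= m * (t+1) by apply: ler_wpM2r => //; lra.
have h3 : 0 <= q * (1 - M) by apply: mulr_ge0; lra.
lra.
Qed.

Lemma arith1 (R : realType) (q M g : R) (j t : nat) : 0 <= q -> q <= M -> 0 <= g ->
  q ^+ (j + t) * (j + t).+1%:R * g <= M ^+ t * t.+1%:R * (q ^+ j * j.+1%:R * g).
Proof.
move=> q0 qM g0.
have hq : q ^+ t <= M ^+ t by apply: lerXn2r; rewrite ?nnegrE //; apply: le_trans qM.
have hn : ((j + t).+1%:R : R) <= t.+1%:R * j.+1%:R by rewrite -natrM ler_nat; lia.
rewrite exprD.
have -> : q ^+ j * q ^+ t * (j + t).+1%:R * g = (q ^+ j * g) * (q ^+ t * (j + t).+1%:R) by ring.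
have -> : M ^+ t * t.+1%:R * (q ^+ j * j.+1%:R * g) = (q ^+ j * g) * (M ^+ t * (t.+1%:R * j.+1%:R)) by ring.
apply: ler_wpM2l; first by apply: mulr_ge0 => //; apply: exprn_ge0.
by apply: ler_pM => //; apply: exprn_ge0.
Qed.

Lemma final_ineq (R : realType) (c D a1 a2 : R) (n : nat) : 0 <= c -> 0 <= D -> 0 <= a1 -> 0 <= a2 ->
  c * D + (c * (a1 + a2)) *+ n + c * a1 <= c * n.+1%:R * (D + a1 + a2).
Proof.
move=> c0 D0 a10 a20.
rewrite -mulr_natr -[n.+1]addn1 natrD.
have n0 : (0 : R) <= n%:R by [].
have h1 : 0 <= c * D * n%:R by apply: mulr_ge0 => //; apply: mulr_ge0.
have h2 : 0 <= c * a2 by apply: mulr_ge0.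
have -> : c * (n%:R + 1%:R) * (D + a1 + a2) = c * D * n%:R + c * a2 + (c * D + c * (a1 + a2) * n%:R + c * a1) by ring.
lra.
Qed.
Theorem lemma3 (R : realType) (K : nat) (lam C F D : nat -> R)
  (sh s : nat -> nat) (B G Bh Gh : nat -> nat -> R) :
  (0 < K)%N ->
  (forall k, (1 <= k <= K)%N -> 0 <= lam k) ->
  (forall k, (1 <= k <= K)%N -> 0 <= C k) ->
  (forall k, (1 <= k <= K)%N -> 0 < F k < 1) ->
  (1 <= sh 1)%N ->
  (forall k, (1 <= k < K)%N -> (sh k <= sh k.+1)%N) ->
  s 0%N = 1%N ->
  (forall k, (k < K)%N -> (s k <= s k.+1)%N) ->
  (forall k, (1 <= k <= K)%N -> 0 <= D k) ->
  (* hypotheses on B and G *)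
  (forall k l, (1 <= k <= K)%N -> (sh k <= l)%N -> 0 <= B k l <= 2) ->
  (forall k l, (1 <= k <= K)%N -> (sh k <= l)%N ->
     B k l <= C k * \sum_(1 <= k' < k) lam k' * G k' l.-1) ->
  (forall k l, (1 <= k <= K)%N -> (s k - 1 <= l)%N ->
     G k l <= F k ^+ (l - (s k - 1)) * D k
              + \sum_(s k - 1 <= l' < l) F k ^+ (l - l') * (B k l' + B k l'.-1)
              + B k l) ->
  (* recursive definitions of hat B and hat G *)
  (forall k, (1 <= k <= K)%N ->
     Bh k (sh k) = C k * \sum_(1 <= k' < k) lam k' * Gh k' (sh k).-1) ->
  (forall k l, (1 <= k <= K)%N -> (sh k < l)%N ->
     Bh k l = Num.min 2 (mseq F k.-1 ^+ (l - sh k) * (l - sh k).+1%:R * Bh k (sh k))) ->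
  (forall k, (1 <= k <= K)%N ->
     Gh k (s k - 1)%N = D k + Bh k (s k - 1)%N + Bh k (s k - 2)%N) ->
  (forall k l, (1 <= k <= K)%N -> (s k <= l)%N ->
     Gh k l = mseq F k ^+ (l - s k).+1 * (l - s k).+2%:R * Gh k (s k - 1)%N) ->
  (* standing assumptions *)
  (forall k, (1 <= k < K)%N -> (s k <= sh k.+1)%N) ->
  (forall k, (1 <= k <= K)%N ->
     mseq F k.-1 ^+ (s k - sh k - 2) <= 1 / ((s k)%:R - (sh k)%:R - 1)) ->
  (forall k, (1 <= k <= K)%N ->
     k%:R * mseq F k.-1 / (1 - mseq F k.-1) + (sh k)%:R + 2 <= (s k)%:R) ->
  (forall k, (1 <= k <= K)%N -> Bh k (sh k) <= 2) ->
  forall k, (1 <= k <= K)%N ->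
    (forall l, (sh k <= l)%N -> B k l <= Bh k l) /\
    (forall l, (s k - 1 <= l)%N -> G k l <= Gh k l).
Proof.
move=> K0 lam0 C0 F01 sh1 shmon s0 smon D0 B02 Bub Gub BhE0 BhE GhE0 GhE ssh hpow hs Bh2.
have shle : forall i j, (1 <= i)%N -> (i <= j)%N -> (j <= K)%N -> (sh i <= sh j)%N.
  move=> i j hi; elim: j => [|j IH]; first by rewrite leqn0 => /eqP ->.
  rewrite leq_eqVlt => /orP [/eqP -> //| hlt] hj.
  apply: (leq_trans (IH hlt (ltnW hj))); apply: shmon.
  by rewrite hj (leq_trans hi hlt).
have sshk : forall k' k, (1 <= k')%N -> (k' < k)%N -> (k <= K)%N -> (s k' <= sh k)%N.
  move=> k' k h1 h2 h3; apply: (leq_trans (ssh k' _)); first by rewrite h1 (leq_trans h2 h3).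
  by apply: shle.
have sge : forall k, (1 <= k <= K)%N -> (sh k + 2 <= s k)%N.
  move=> k hk; have h := hs k hk.
  rewrite leqNgt; apply/negP => hlt.
  have : (s k <= sh k + 1)%N by lia.
  rewrite -(ler_nat R) natrD => hle.
  have : -1 < k%:R * mseq F k.-1 / (1 - mseq F k.-1).
    case: k hk h hlt hle => [//|[|k]] hk h hlt hle.
      rewrite /= mul1r opprK mulN1r ltrN2 invf_lt1; lra.
    have [/andP [m0 m1] _] := @m_bnd R F K F01 k.+1 (ltnW hk).
    apply: (lt_le_trans (y := 0)); first by lra.
    apply: divr_ge0; last by change (0 <= 1 - mseq F k.+1); lra.
    by apply: mulr_ge0 => //; apply: ltW.
  lra.
have GhE' : forall k i, (1 <= k <= K)%N ->
    Gh k (s k - 1 + i)%N = mseq F k ^+ i * i.+1%:R * Gh k (s k - 1)%N.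
  move=> k [|i] hk; first by rewrite addn0 expr0 mul1r mul1r.
  have := sge k hk => hs2.
  rewrite GhE //; last by lia.
  by have -> : (s k - 1 + i.+1 - s k = i)%N by lia.

suff main : forall k, (1 <= k <= K)%N ->
   [/\ (forall l, (sh k <= l)%N -> B k l <= Bh k l),
       (forall l, (s k - 1 <= l)%N -> G k l <= Gh k l) &
       (forall l, (s k - 1 <= l)%N -> 0 <= Gh k l)].
  by move=> k hk; have [h1 h2 _] := main k hk.
elim/ltn_ind => k IH hk.
have /andP [k1 kK] := hk.
have hk' : forall k', (1 <= k')%N -> (k' < k)%N -> (1 <= k' <= K)%N.
  move=> k' h1 h2; rewrite h1 /=; exact: ltnW (leq_trans h2 kK).
have Gprev : forall k' l, (1 <= k')%N -> (k' < k)%N -> (sh k <= l)%N ->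
    lam k' * G k' l.-1 <= lam k' * Gh k' l.-1.
  move=> k' l h1 h2 hl; apply: ler_wpM2l; first exact: lam0 (hk' _ h1 h2).
  have [_ hG _] := IH k' h2 (hk' _ h1 h2); apply: hG.
  have := sshk k' k h1 h2 kK; lia.
have b0 : 0 <= Bh k (sh k).
  rewrite BhE0 //; apply: mulr_ge0; first exact: C0.
  rewrite big_nat; apply: sumr_ge0 => k' /andP[h1 h2].
  apply: mulr_ge0; first exact: lam0 (hk' _ h1 h2).
  have [_ _ nn] := IH k' h2 (hk' _ h1 h2); apply: nn.
  have := sshk k' k h1 h2 kK; lia.
set b := Bh k (sh k) in b0 *.
set M := mseq F k.-1.
set m := mseq F k.
have [/andP[m0 m1] Fm] := @m_bnd R F K F01 k hk.
set x := fun t : nat => M ^+ t * t.+1%:R * b.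
set t0 := (s k - sh k - 2)%N.
have sg := sge k hk.
have es : s k = (sh k + t0 + 2)%N by rewrite /t0; lia.
have hcase : b = 0 \/ [/\ 0 <= M, M < 1 &
     (forall t, (t0 <= t)%N -> M * (t%:R + 2) <= m * (t%:R + 1))].
  have [ek|k2] := eqVneq k 1%N.
    left; rewrite /b BhE0 // big_geq ?mulr0 //; by rewrite ek.
  right.
  have [n en] : exists n, k = n.+2 by exists (k - 2)%N; lia.
  have eM : M = mseq F n.+1 by rewrite /M en.
  have [/andP[M0 M1] _] := @m_bnd R F K F01 n.+1 (ltac:(lia)).
  rewrite eM; split; [exact: ltW M0 | exact: M1 | move=> t ht].
  have hrec := @m_rec R F K F01 n (ltac:(lia)).
  apply: (@xstep R (mseq F n.+1) m (1 / (n.+2)%:R) (n.+2)%:R t%:R).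
  - by rewrite (ltW M0) M1.
  - by rewrite mul1r invr_ge0.
  - by rewrite mul1r mulVf // pnatr_eq0.
  - by rewrite /m en.
  - have := hs k hk; rewrite -/M eM es !natrD -en.
    have : (t0%:R : R) <= t%:R by rewrite ler_nat.
    lra.
  - by [].
have xnn : forall t, 0 <= x t.
  move=> t; case: hcase => [e|[M0 _ _]]; first by rewrite /x e mulr0.
  by apply: mulr_ge0 => //; apply: mulr_ge0 => //; apply: exprn_ge0.
have xdec : forall t, (t0 <= t)%N -> x t.+1 <= m * x t.
  move=> t ht; case: hcase => [e|[M0 _ st]]; first by rewrite /x e !mulr0.
  rewrite /x exprS.
  have -> : M * M ^+ t * t.+2%:R * b = (M ^+ t * b) * (M * (t%:R + 2)).
    by rewrite -[t.+2]addn2 natrD; ring.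
  have -> : m * (M ^+ t * t.+1%:R * b) = (M ^+ t * b) * (m * (t%:R + 1)).
    by rewrite -[t.+1]addn1 natrD; ring.
  apply: ler_wpM2l; last exact: st.
  by apply: mulr_ge0 => //; apply: exprn_ge0.
have xgeom : forall j i, (t0 <= j)%N -> x (j + i)%N <= m ^+ i * x j.
  move=> j; elim=> [|i IHi] hj; first by rewrite addn0 expr0 mul1r.
  rewrite addnS; apply: le_trans (xdec _ _) _; first lia.
  rewrite exprS -mulrA; apply: ler_wpM2l; [exact: ltW m0 | exact: IHi].
have xle2 : forall t, (t0 <= t)%N -> x t <= 2.
  move=> t ht; case: hcase => [e|[M0 M1 _]]; first by rewrite /x e mulr0.
  have xt0 : x t0 <= b.
    have hp := hpow k hk; rewrite -/M -/t0 in hp.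
    have ed : ((s k)%:R - (sh k)%:R - 1 : R) = t0.+1%:R.
      by rewrite es -[t0.+1]addn1 !natrD; ring.
    rewrite ed ler_pdivlMr ?ltr0n // in hp.
    rewrite /x; apply: ler_piMl => //.
  apply: (le_trans _ (Bh2 k hk)); apply: le_trans xt0.
  have := xgeom t0 (t - t0)%N (leqnn _); rewrite subnKC // => h.
  apply: (le_trans h); apply: ler_piMl; first exact: xnn.
  by apply: exprn_ile1; apply: ltW.
have BhX : forall t, (t0 <= t)%N -> Bh k (sh k + t)%N = x t.
  move=> [|t] ht; first by rewrite addn0 /x expr0 mul1r mul1r.
  rewrite BhE //; last by lia.
  have -> : (sh k + t.+1 - sh k = t.+1)%N by lia.
  exact: min_r (xle2 _ ht).
have Bhnn : forall l, (sh k <= l)%N -> 0 <= Bh k l.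
  move=> l; rewrite leq_eqVlt => /orP[/eqP <- //|hl].
  rewrite BhE // le_min; apply/andP; split; first by [].
  exact: xnn.
have Bhgeom : forall j i, (t0 <= j)%N -> Bh k (sh k + j + i)%N <= m ^+ i * Bh k (sh k + j)%N.
  move=> j i hj; rewrite -addnA !BhX //; [exact: xgeom | lia].

have part1 : forall l, (sh k <= l)%N -> B k l <= Bh k l.
  move=> l hl.
  have hB := Bub k l hk hl.
  have hS : \sum_(1 <= k' < k) lam k' * G k' l.-1 <= \sum_(1 <= k' < k) lam k' * Gh k' l.-1.
    by apply: ler_sum_nat => k' /andP[h1 h2]; exact: Gprev.
  have hB' : B k l <= C k * \sum_(1 <= k' < k) lam k' * Gh k' l.-1.
    by apply: (le_trans hB); apply: ler_wpM2l => //; exact: C0.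
  move: hl; rewrite leq_eqVlt => /orP[/eqP el|hl].
    by rewrite -el in hB' *; rewrite /b BhE0.
  rewrite BhE // le_min; apply/andP; split.
    by have /andP[_ ->] := B02 k l hk (ltnW hl).
  apply: (le_trans hB').
  have key : forall k', (1 <= k')%N -> (k' < k)%N ->
      Gh k' l.-1 <= M ^+ (l - sh k) * (l - sh k).+1%:R * Gh k' (sh k).-1.
    move=> k' h1 h2; have hk'' := hk' _ h1 h2.
    have sk' := sshk k' k h1 h2 kK; have sg' := sge k' hk''.
    have e1 : l.-1 = (s k' - 1 + ((sh k - s k') + (l - sh k)))%N by lia.
    have e2 : (sh k).-1 = (s k' - 1 + (sh k - s k'))%N by lia.
    rewrite e1 e2 !GhE' //; apply: arith1.
    - by have [/andP[q0 _] _] := @m_bnd R F K F01 k' hk''; exact: ltW.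
    - by rewrite /M; apply: (@m_mono R F K F01 k' k.-1); lia.
    - by have [_ _ nn] := IH k' h2 hk''; apply: nn.
  rewrite /b BhE0 //.
  rewrite [X in _ <= X]mulrCA [in X in _ <= X]mulr_sumr.
  apply: ler_wpM2l; first exact: C0.
  apply: ler_sum_nat => k' /andP[h1 h2]; rewrite mulrCA.
  apply: ler_wpM2l; [exact: lam0 (hk' _ h1 h2) | exact: key].
have a1nn : 0 <= Bh k (s k - 1)%N by apply: Bhnn; clear -es; lia.
have a2nn : 0 <= Bh k (s k - 2)%N by apply: Bhnn; clear -es; lia.
have part2 : forall l, (s k - 1 <= l)%N -> G k l <= Gh k l.
  move=> l hl.
  have el : l = (s k - 1 + (l - (s k - 1)))%N by clear -hl; lia.
  have eG : Gh k l = m ^+ (l - (s k - 1)) * (l - (s k - 1)).+1%:R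
              * (D k + Bh k (s k - 1)%N + Bh k (s k - 2)%N).
    by rewrite {1}el GhE' // GhE0.
  rewrite eG; apply: (le_trans (Gub k l hk hl)).
  have F0 : 0 <= F k by have /andP[f0 _] := F01 k hk; exact: ltW.
  have T1 : F k ^+ (l - (s k - 1)) * D k <= m ^+ (l - (s k - 1)) * D k.
    apply: ler_wpM2r; first exact: D0.
    by apply: lerXn2r; rewrite ?nnegrE //; exact: ltW.
  have T2 : \sum_(s k - 1 <= l' < l) F k ^+ (l - l') * (B k l' + B k l'.-1)
       <= (m ^+ (l - (s k - 1)) * (Bh k (s k - 1)%N + Bh k (s k - 2)%N)) *+ (l - (s k - 1)).
    rewrite -sumr_const_nat; apply: ler_sum_nat => l' /andP[h1 h2].
    have hBl : B k l' <= Bh k l' by apply: part1; clear -es h1; lia.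
    have hBl1 : B k l'.-1 <= Bh k l'.-1 by apply: part1; clear -es h1; lia.
    have g1 : Bh k l' <= m ^+ (l' - (s k - 1)) * Bh k (s k - 1)%N.
      have := Bhgeom t0.+1 (l' - (s k - 1))%N (leqnSn t0).
      have -> : (sh k + t0.+1 + (l' - (s k - 1)))%N = l' by clear -es h1; lia.
      by have -> : (sh k + t0.+1)%N = (s k - 1)%N by clear -es; lia.
    have g2 : Bh k l'.-1 <= m ^+ (l' - (s k - 1)) * Bh k (s k - 2)%N.
      have := Bhgeom t0 (l' - (s k - 1))%N (leqnn t0).
      have -> : (sh k + t0 + (l' - (s k - 1)))%N = l'.-1 by clear -es h1; lia.
      by have -> : (sh k + t0)%N = (s k - 2)%N by clear -es; lia.
    have -> : m ^+ (l - (s k - 1)) * (Bh k (s k - 1)%N + Bh k (s k - 2)%N)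
        = m ^+ (l - l') * (m ^+ (l' - (s k - 1)) * Bh k (s k - 1)%N
                          + m ^+ (l' - (s k - 1)) * Bh k (s k - 2)%N).
      rewrite -mulrDr mulrA -exprD.
      by have -> : (l - l' + (l' - (s k - 1)) = l - (s k - 1))%N by clear -h1 h2; lia.
    apply: ler_pM.
    - exact: exprn_ge0.
    - have /andP[p1 _] := B02 k l' hk (ltac:(clear -es h1; lia)).
      have /andP[p2 _] := B02 k l'.-1 hk (ltac:(clear -es h1; lia)).
      exact: addr_ge0.
    - by apply: lerXn2r; rewrite ?nnegrE //; exact: ltW.
    - apply: lerD; [exact: le_trans hBl g1 | exact: le_trans hBl1 g2].
  have T3 : B k l <= m ^+ (l - (s k - 1)) * Bh k (s k - 1)%N.
    apply: (le_trans (part1 l (ltac:(clear -es hl; lia)))).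
    have := Bhgeom t0.+1 (l - (s k - 1))%N (leqnSn t0).
    have -> : (sh k + t0.+1 + (l - (s k - 1)))%N = l by clear -es hl; lia.
    by have -> : (sh k + t0.+1)%N = (s k - 1)%N by clear -es; lia.
  apply: le_trans (lerD (lerD T1 T2) T3) _.
  apply: final_ineq => //; [apply: exprn_ge0; exact: ltW m0 | exact: D0].
split => //.
move=> l hl.
have el : l = (s k - 1 + (l - (s k - 1)))%N by clear -hl; lia.
rewrite el GhE' // GhE0 //.
apply: mulr_ge0; first by apply: mulr_ge0 => //; apply: exprn_ge0; exact: ltW.
apply: addr_ge0 => //; apply: addr_ge0 => //; exact: D0.
Qed.
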